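(* Let $G=(V,E)$ be a finite simple graph and $T\geq1$ an integer. For each zero forcing set $C$ that is the initial set of a zero forcing game in $\mathcal{Z}(G,T)$, there is a feasible solution $(x,y,z)$ of the Time Step Model $\mathrm{TSM}(G,T)$ such that $|C|=\sum_{v\in V}x^0_v$ and $\sum_{t\in[T]}z^t=\mathrm{pt}(G,C)\leq T$.
   Context: Zero forcing: $n=|V|$, $N(u)$ is the neighborhood of $u$, $d(u)=|N(u)|$. Under the standard color change rule, a filled vertex $u$ can force a non-filled vertex $v$ if $v$ is the only non-filled neighbor of $u$. A zero forcing game on $G$ with initial set $C\subseteq V$ consists of sets $C^{(0)}=C^{[0]}=C$, sets $C^{(t)}$ (vertices forced at step $t$) with $C^{[t]}=C^{[t-1]}\cup C^{(t)}$, and a collection $\phi(C)$ of forces $u\to v$, such that every vertex lies in exactly one $C^{(t)}$, and each $v\in C^{(t)}$, $t\geq1$, is forced by exactly one neighbor $u$ such that $u$ and all neighbors of $u$ other than $v$ lie in $C^{[t-1]}$. $C$ is a zero forcing set if repeated forcing eventually fills all of $V$. The propagation time $\mathrm{pt}(G,C)$ is the smallest $t^*$ with $C^{[t^*]}=V$ when at each step all possible forces are applied simultaneously, i.e. $C^{(t)}$ is the set of all $v\notin C^{[t-1]}$ for which some $u\in C^{[t-1]}$ has $v$ as its unique neighbor outside $C^{[t-1]}$ ($\mathrm{pt}(G,C)=\infty$ if $C$ is not a zero forcing set). Here $\mathcal{Z}(G,T)$ denotes the family of zero forcing games on $G$ whose initial set is a zero forcing set, which use at most $T$ time steps, and in which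 at each time step all possible forces are applied. Time Step Model: $A$ is the set of arcs containing $(u,v)$ and $(v,u)$ for each edge $\{u,v\}$, $[T]=\{1,\dots,T\}$. $\mathrm{TSM}(G,T)$ has binary variables $x^t_v$ ($v\in V$, $t\in\{0,\dots,T\}$), $y^t_a$ ($a\in A$, $t\in[T]$), $z^t$ ($t\in[T]$), with constraints: (1) $x^0_v+\sum_{t\in[T]}\sum_{a=(u,v)\in A}y^t_a=1$ for all $v$; (2) $y^t_a\leq x^{t-1}_u$ for all $a=(u,v)\in A$, $t\in[T]$; (3) $y^t_a\leq x^{t-1}_w$ for all $a=(u,v)\in A$, $w\in N(u)\setminus\{v\}$, $t\in[T]$; (4) $x^t_v=x^{t-1}_v+\sum_{a=(u,v)\in A}y^t_a$ for all $v$, $t\in[T]$; (5) $x^{t-1}_u-x^{t-1}_v+\sum_{w\in N(u)\setminus\{v\}}x^{t-1}_w\leq\sum_{a=(w,v)\in A}y^t_a+d(u)-1$ for all $(u,v)\in A$, $t\in[T]$; (6) $\frac1n\sum_{v\in V}(x^t_v-x^{t-1}_v)-z^t\leq0$ for all $t\in[T]$; (7) $z^t-\sum_{v\in V}(x^t_v-x^{t-1}_v)\leq 0$ for all $t\in[T]$. A feasible solution is one satisfying all constraints. *)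

(* Defs.v *)
From mathcomp Require Import all_boot all_order all_algebra.
Set Implicit Arguments. Unset Strict Implicit. Unset Printing Implicit Defensive.
Import Order.TTheory GRing.Theory Num.Theory.

Definition simple_graph (V : finType) (adj : rel V) : Prop :=
  symmetric adj /\ irreflexive adj.

Definition nbhd (V : finType) (adj : rel V) (u : V) : {set V} := [set w | adj u w].

Definition zf_step (V : finType) (adj : rel V) (S : {set V}) : {set V} :=
  S :|: [set v | [exists u, [&& u \in S, adj u v &
                 [forall w, (adj u w && (w != v)) ==> (w \in S)]]]].

Definition filled_at (V : finType) (adj : rel V) (C : {set V}) (t : nat) : {set V} :=
  iter t (zf_step adj) C.

Definition is_pt (V : finType) (adj : rel V) (C : {set V}) (p : nat) : Prop :=
  filled_at adj C p = setT /\ (forall t, (t < p)%N -> filled_at adj C t != setT).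

Definition in_ZGT (V : finType) (adj : rel V) (T : nat) (C : {set V}) : Prop :=
  exists t, (t <= T)%N /\ filled_at adj C t = setT.

Local Open Scope ring_scope.

Definition binary (r : rat) : bool := (r == 0) || (r == 1).

(* Feasibility for TSM(G,T).  x t v = x^t_v (t in 0..T), y t u v = y^t_{(u,v)}
   for arcs (u,v) (adj u v), t in [T]; z t = z^t. Values outside these index
   ranges are irrelevant. *)
Definition TSM_feasible (V : finType) (adj : rel V) (T : nat)
    (x : nat -> V -> rat) (y : nat -> V -> V -> rat) (z : nat -> rat) : Prop :=
  (forall t v, (t <= T)%N -> binary (x t v)) /\
  (forall t u v, (1 <= t <= T)%N -> adj u v -> binary (y t u v)) /\
  (forall t, (1 <= t <= T)%N -> binary (z t)) /\
  (forall v, x 0%N v + \sum_(1 <= t < T.+1) \sum_(u | adj u v) y t u v = 1) /\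
  (forall t u v, (1 <= t <= T)%N -> adj u v -> y t u v <= x t.-1 u) /\
  (forall t u v w, (1 <= t <= T)%N -> adj u v -> w \in nbhd adj u -> w != v ->
      y t u v <= x t.-1 w) /\
  (forall t v, (1 <= t <= T)%N ->
      x t v = x t.-1 v + \sum_(u | adj u v) y t u v) /\
  (forall t u v, (1 <= t <= T)%N -> adj u v ->
      x t.-1 u - x t.-1 v + \sum_(w in nbhd adj u :\ v) x t.-1 w
        <= \sum_(w | adj w v) y t w v + (#|nbhd adj u|)%:R - 1) /\
  (forall t, (1 <= t <= T)%N ->
      (#|V|%:R)^-1 * \sum_(v : V) (x t v - x t.-1 v) - z t <= 0) /\
  (forall t, (1 <= t <= T)%N ->
      z t - \sum_(v : V) (x t v - x t.-1 v) <= 0).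

(* Main.v *)
Require Import Defs.
From mathcomp Require Import all_boot all_order all_algebra.
From mathcomp Require Import zify ring lra.
Set Implicit Arguments. Unset Strict Implicit.
Import Order.TTheory GRing.Theory Num.Theory.
Local Open Scope ring_scope.

Definition forcer (V : finType) (adj : rel V) (S : {set V}) (v u : V) : bool :=
  [&& u \in S, adj u v & [forall w, (adj u w && (w != v)) ==> (w \in S)]].

Definition fpick (V : finType) (adj : rel V) (C : {set V}) (s : nat) (v : V) :=
  [pick u | forcer adj (filled_at adj C s) v u].

Lemma fa_S (V : finType) (adj : rel V) (C : {set V}) s :
  filled_at adj C s.+1 = zf_step adj (filled_at adj C s).
Proof. by rewrite /filled_at iterS. Qed.

Lemma mem_step (V : finType) (adj : rel V) (S : {set V}) v :
  (v \in zf_step adj S) = (v \in S) || [exists u, forcer adj S v u].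
Proof. by rewrite /zf_step !inE. Qed.

Lemma fa_mono (V : finType) (adj : rel V) (C : {set V}) s t v :
  (s <= t)%N -> v \in filled_at adj C s -> v \in filled_at adj C t.
Proof.
move=> /subnKC <-; elim: (t - s)%N => [|k IH]; first by rewrite addn0.
by move=> h; rewrite addnS fa_S mem_step IH.
Qed.

Lemma fa_stable (V : finType) (adj : rel V) (C : {set V}) s :
  filled_at adj C s.+1 = filled_at adj C s ->
  forall k, filled_at adj C (s + k) = filled_at adj C s.
Proof.
move=> E; elim=> [|k IH]; first by rewrite addn0.
by rewrite addnS fa_S IH -fa_S.
Qed.

Lemma ysum (V : finType) (adj : rel V) (C : {set V}) s v :
  \sum_(u | adj u v) ((v \in filled_at adj C s.+1) && (v \notin filled_at adj C s)
       && (fpick adj C s v == Some u))%:R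
  = ((v \in filled_at adj C s.+1) && (v \notin filled_at adj C s))%:R :> rat.
Proof.
case: (boolP ((v \in filled_at adj C s.+1) && (v \notin filled_at adj C s))) => h;
  last by rewrite big1 // => u _; rewrite (negbTE h).
move: (h) => /andP[h1 h2].
have /existsP ex : [exists u, forcer adj (filled_at adj C s) v u].
  by move: h1; rewrite fa_S mem_step (negbTE h2).
rewrite /fpick; case: pickP => [u0 Hu0 | Hn]; last by case: ex => u; rewrite Hn.
rewrite (bigD1 u0) /=; last by case/and3P: Hu0.
rewrite eqxx big1 ?addr0 // => u /andP[_ hu].
by case: eqP => // [[E]]; rewrite E eqxx in hu.
Qed.

Lemma sum_bool_le (V : finType) (A : {set V}) (b : V -> bool) :
  \sum_(w in A) (b w)%:R <= #|A|%:R :> rat.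
Proof.
rewrite -sum1_card natr_sum; apply: ler_sum => w _; by case: (b w).
Qed.

Lemma sum_bool_lt (V : finType) (A : {set V}) (b : V -> bool) w0 :
  w0 \in A -> ~~ b w0 -> \sum_(w in A) (b w)%:R <= #|A|%:R - 1 :> rat.
Proof.
move=> hA hb; rewrite (big_setD1 w0) //= (negbTE hb) add0r (cardsD1 w0) hA.
rewrite add1n -addn1 natrD; have := sum_bool_le (A :\ w0) b; rewrite ?b1 ?b0; lra.
Qed.

Lemma sum_minn p m :
  \sum_(1 <= t < m.+1) ((t <= p)%N%:R : rat) = (minn m p)%:R.
Proof.
elim: m => [|m IH]; first by rewrite big_geq // min0n.
rewrite big_nat_recr //= IH -natrD; congr (_%:R).
case: leqP => h; lia.
Qed.

Theorem theorem4p3 (V : finType) (adj : rel V) (T : nat) (C : {set V}) :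
  simple_graph adj -> (1 <= T)%N -> in_ZGT adj T C ->
  exists (x : nat -> V -> rat) (y : nat -> V -> V -> rat) (z : nat -> rat),
    TSM_feasible adj T x y z /\
    (#|C|%:R = \sum_(v : V) x 0%N v) /\
    exists p : nat, is_pt adj C p /\
      \sum_(1 <= t < T.+1) z t = p%:R /\ (p <= T)%N.
Proof.
move=> [adjsym adjirr] T1 [t0 [t0T Ht0]].
have exP : exists n, filled_at adj C n == setT by exists t0; apply/eqP.
case: (ex_minnP exP) => p /eqP Hp Hmin.
have pT : (p <= T)%N by apply: leq_trans (Hmin _ _) t0T; apply/eqP.
have Hfull : forall t, (p <= t)%N -> forall v, v \in filled_at adj C t.
  by move=> t pt v; apply: (fa_mono pt); rewrite Hp inE.
have Hgrow : forall s, (s < p)%N -> exists v,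
    (v \in filled_at adj C s.+1) && (v \notin filled_at adj C s).
  move=> s sp; case: (boolP [exists v, (v \in filled_at adj C s.+1) && (v \notin filled_at adj C s)]).
    by move/existsP.
  move/existsPn => H; exfalso.
  have E : filled_at adj C s.+1 = filled_at adj C s.
    apply/setP => v; apply/idP/idP; last exact: fa_mono.
    by move: (H v); case: (v \in filled_at adj C s.+1); rewrite //= negbK.
  have := fa_stable E (p - s); rewrite subnKC ?(ltnW sp) // => E2.
  have := Hmin s; rewrite -E2 Hp eqxx => /(_ isT); rewrite leqNgt sp.
  done.
set S := filled_at adj C.
exists (fun t v => (v \in S t)%:R).
exists (fun t u v => ((v \in S t) && (v \notin S t.-1) && (fpick adj C t.-1 v == Some u))%:R).
exists (fun t => (t <= p)%N%:R).
have bin : forall b : bool, binary (b%:R) by case.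
have b1 : (true%:R : rat) = 1 by [].
have b0 : (false%:R : rat) = 0 by [].
have H4 : forall t v, (1 <= t <= T)%N ->
    (v \in S t)%:R = (v \in S t.-1)%:R +
      \sum_(u | adj u v) ((v \in S t) && (v \notin S t.-1) && (fpick adj C t.-1 v == Some u))%:R :> rat.
  case=> // s v _ /=; rewrite ysum.
  case: (boolP (v \in S s)) => hs /=.
    by rewrite (fa_mono (leqnSn s) hs) addr0.
  by rewrite add0r andbT.
have xdiff : forall s v, ((v \in S s.+1)%:R - (v \in S s)%:R : rat) =
    ((v \in S s.+1) && (v \notin S s))%:R.
  move=> s v; case: (boolP (v \in S s)) => hs /=.
    by rewrite (fa_mono (leqnSn s) hs) subrr.
  by rewrite subr0 andbT.
split.
  split; first by move=> *; apply: bin.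
  split; first by move=> *; apply: bin.
  split; first by move=> *; apply: bin.
  split.
    move=> v.
    have tel : forall m, (m <= T)%N -> (v \in S 0%N)%:R +
      \sum_(1 <= t < m.+1) \sum_(u | adj u v) ((v \in S t) && (v \notin S t.-1) && (fpick adj C t.-1 v == Some u))%:R
      = (v \in S m)%:R :> rat.
      elim=> [|m IH] hm; first by rewrite big_geq // addr0.
      rewrite big_nat_recr //= addrA IH ?(ltnW hm) //.
      by rewrite [in RHS](H4 m.+1 v) //= hm.
    by rewrite tel // (Hfull T pT).
  split.
    case=> // s u v _ a /=.
    case: (boolP ((v \in S s.+1) && (v \notin S s))) => //= _.
    rewrite /fpick; case: pickP => // u0 /and3P[h1 _ _].
    by case: eqP => // [[<-]]; rewrite h1.
  split.
    case=> // s u v w _ a wN wv /=.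
    case: (boolP ((v \in S s.+1) && (v \notin S s))) => //= _.
    rewrite /fpick; case: pickP => // u0 /and3P[_ _ /forallP h3].
    case: eqP => // [[E]]; subst u0.
    have := h3 w; rewrite -(in_set (fun w => adj u w)) -/(nbhd adj u) wN wv /= => ->.
    done.
  split; first exact: H4.
  split.
    case=> // s u v _ a /=; rewrite ysum -/S.
    have hv : v \in nbhd adj u by rewrite inE.
    have cd : #|nbhd adj u|%:R = #|nbhd adj u :\ v|%:R + 1 :> rat.
      by rewrite (cardsD1 v) hv add1n -addn1 natrD.
    rewrite cd.
    have sb := sum_bool_le (nbhd adj u :\ v) (fun w => w \in S s).
    have ge0 : forall b : bool, (0 : rat) <= b%:R by case.
    case: (boolP [forall w, (adj u w && (w != v)) ==> (w \in S s)]) => hall.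
      case: (boolP (u \in S s)) => hu; last first.
        have := ge0 ((v \in S s.+1) && (v \notin S s)); have := ge0 (v \in S s).
        rewrite /=; rewrite ?b1 ?b0; lra.
      case: (boolP (v \in S s)) => hvs; last first.
        have -> : v \in S s.+1.
          rewrite /S fa_S mem_step; apply/orP; right; apply/existsP; exists u.
          by rewrite /forcer hu a hall.
        rewrite /=; rewrite ?b1 ?b0; lra.
      rewrite andbF ?b1 ?b0; rewrite ?b1 ?b0; lra.
    move/forallPn: hall => [w]; rewrite negb_imply => /andP[/andP[aw wv] wS].
    have hw : w \in nbhd adj u :\ v by rewrite !inE aw wv.
    have sl := sum_bool_lt (b := fun w => w \in S s) hw wS.
    have := ge0 ((v \in S s.+1) && (v \notin S s)); have := ge0 (v \in S s).
    have : (u \in S s)%:R <= 1 :> rat by case: (u \in S s).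
    rewrite ?b1 ?b0; lra.
  have dsum : forall s, \sum_(v : V) ((v \in S s.+1)%:R - (v \in S s)%:R) =
      \sum_(v : V) ((v \in S s.+1) && (v \notin S s))%:R :> rat.
    by move=> s; apply: eq_bigr => v _; rewrite xdiff.
  split.
    case=> // s _ /=; rewrite dsum.
    case: (leqP s.+1 p) => hp /=.
      have sb := sum_bool_le [set: V] (fun v => (v \in S s.+1) && (v \notin S s)).
      rewrite cardsT in sb.
      have -> : \sum_(v : V) ((v \in S s.+1) && (v \notin S s))%:R =
         \sum_(v in [set: V]) ((v \in S s.+1) && (v \notin S s))%:R :> rat.
        by apply: eq_bigl => v; rewrite inE.
      have [n0|npos] := eqVneq (#|V|%:R : rat) 0.
        by rewrite n0 invr0 mul0r subr_le0.
      have : (#|V|%:R : rat)^-1 * (\sum_(v in [set: V]) ((v \in S s.+1) && (v \notin S s))%:R)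
          <= (#|V|%:R)^-1 * #|V|%:R.
        by apply: ler_wpM2l => //; rewrite invr_ge0.
      rewrite mulVf //; rewrite ?b1 ?b0; lra.
    rewrite big1 ?mulr0 ?subrr // => v _.
    by rewrite (Hfull s) // andbF.
  case=> // s _ /=; rewrite dsum.
  case: (leqP s.+1 p) => hp /=.
    have [v hv] := Hgrow s hp.
    rewrite (bigD1 v) //= hv.
    set r := \sum_(i | _) _.
    have : 0 <= r by apply: sumr_ge0 => w _; case: (_ && _).
    rewrite ?b1; lra.
  rewrite subr_le0; apply: sumr_ge0 => w _; by case: (_ && _).
split.
  rewrite -sum1_card natr_sum [in RHS](bigID (fun v => v \in C)) /=.
  rewrite [X in _ = _ + X]big1 ?addr0; last by move=> v /negbTE ->.
  by apply: eq_bigr => v ->.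
exists p; split.
  split => // t tp; apply/negP => /eqP E.
  by have := Hmin t; rewrite E eqxx => /(_ isT); rewrite leqNgt tp.
by rewrite sum_minn (minn_idPr pT).
Qed.
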